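(* Under the uniform random scheduler, the expected running time of Protocol 1 (2-Slot protocol) on $n$ nodes, started with one node in $L_0$ and the others in $F$, until the leader's component spans all $n$ nodes is $O(\log n)$ parallel time (i.e. $O(n\log n)$ interactions).
   Context: Network constructor model: $n$ nodes, every pair may interact; each node pair has an edge state in $\{0,1\}$, initially $0$. At each step the uniform random scheduler picks an unordered pair of nodes uniformly at random among all $n(n-1)/2$ pairs, independently of the past, and updates the pair according to the transition rules (either ordering); unlisted triples are unchanged. Parallel time is the number of steps divided by $n$. Protocol 1 (2-Slot protocol): $Q=\{F,L_0,L_1,L_2,O_0,O_1,O_2\}$, rules $(L_0,F,0)\to(L_1,O_0,1)$, $(L_1,F,0)\to(L_2,O_0,1)$, $(O_0,F,0)\to(O_1,O_0,1)$, $(O_1,F,0)\to(O_2,O_0,1)$; the node moving from $F$ to $O_0$ becomes a child of the other node, and the leader's component is the set of nodes connected to the leader by active edges. *)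

(* Defs.v *)
From HB Require Import structures.
From mathcomp Require Import all_boot all_order all_algebra.
From mathcomp Require Import all_classical all_reals.
From mathcomp Require Import ereal sequences exp.
Set Implicit Arguments. Unset Strict Implicit. Unset Printing Implicit Defensive.
Import Order.TTheory GRing.Theory Num.Theory.

Inductive Q := F | L0 | L1 | L2 | O0 | O1 | O2.

Definition delta (a b : Q) (e : bool) : option (Q * Q * bool) :=
  match a, b, e with
  | L0, F, false => Some (L1, O0, true)
  | L1, F, false => Some (L2, O0, true)
  | O0, F, false => Some (O1, O0, true)
  | O1, F, false => Some (O2, O0, true)
  | _, _, _ => None
  end.

(* A configuration on n nodes: node states and (symmetric) edge states *)
Record config (n : nat) := Config {
  state : 'I_n -> Q;
  edge : 'I_n -> 'I_n -> bool }.

(* Scheduler choices: unordered pairs {u,v}, represented as u < v *)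
Definition pair_t (n : nat) := {p : 'I_n * 'I_n | p.1 < p.2}.

Definition apply_rule n (c : config n) (u v : 'I_n) (r : Q * Q * bool) : config n :=
  let: (a, b, e') := r in
  Config (fun x => if x == u then a else if x == v then b else state c x)
         (fun x y => if ((x == u) && (y == v)) || ((x == v) && (y == u))
                     then e' else edge c x y).

Definition step n (c : config n) (p : pair_t n) : config n :=
  let u := (val p).1 in let v := (val p).2 in
  match delta (state c u) (state c v) (edge c u v) with
  | Some r => apply_rule c u v r
  | None =>
    match delta (state c v) (state c u) (edge c u v) with
    | Some r => apply_rule c v u r
    | None => c
    end
  end.

Definition run n (c : config n) (s : seq (pair_t n)) : config n := foldl (@step n) c s.

Definition init n (l : 'I_n) : config n :=
  Config (fun x => if x == l then L0 else F) (fun _ _ => false).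

Definition spans n (l : 'I_n) (c : config n) : bool :=
  [forall v, connect (fun x y => edge c x y) l v].

(* Probability that the stopping time T exceeds t, i.e. that none of the
   configurations after 0,1,...,t interactions is spanning; the t scheduler
   choices are independent and uniform over the n(n-1)/2 unordered pairs. *)
Definition prob_T_gt (R : realType) n (l : 'I_n) (t : nat) : R :=
  (#|[set s : t.-tuple (pair_t n) |
       [forall k : 'I_t.+1, ~~ spans l (run (init l) (take k s))]]|)%:R
  / (#|{: pair_t n}| ^ t)%:R.

(* Expected number of interactions E[T] = sum_{t >= 0} P(T > t), in \bar R
   (equals +oo if T is infinite with positive probability). *)
Definition expected_time (R : realType) n (l : 'I_n) : \bar R :=
  \sum_(0 <= t <oo) ((prob_T_gt R l t)%:E).

(* Main.v *)
Require Import Defs.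
From HB Require Import structures.
From mathcomp Require Import all_boot all_order all_algebra.
From mathcomp Require Import all_classical all_reals.
From mathcomp Require Import ereal sequences exp.
Import Order.TTheory GRing.Theory Num.Theory.
From mathcomp Require Import topology normedtype.
From Stdlib Require Import Lia.
From mathcomp Require Import zify ring lra.
Import Order.TTheory GRing.Theory Num.Theory.
Set Implicit Arguments. Unset Strict Implicit. Unset Printing Implicit Defensive.

Definition isF (q : Q) : bool := if q is F then true else false.
Definition slots (q : Q) : nat :=
  match q with L0 | O0 => 2 | L1 | O1 => 1 | _ => 0 end.
Definition nxt (q : Q) : Q :=
  match q with L0 => L1 | L1 => L2 | O0 => O1 | O1 => O2 | q => q end.

Lemma isF_eq q : isF q -> q = F. Proof. by case: q. Qed.

Lemma delta_spec a b e r : delta a b e = Some r ->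
  [/\ b = F, e = false, r = (nxt a, O0, true) & 0 < slots a].
Proof. by case: a; case: b; case: e => //= -[<-]. Qed.

Lemma delta_some a : 0 < slots a -> delta a F false = Some (nxt a, O0, true).
Proof. by case: a. Qed.

Lemma delta_F b e : delta F b e = None. Proof. by []. Qed.

Lemma slots_nxt q : 0 < slots q -> slots (nxt q) = (slots q).-1.
Proof. by case: q. Qed.
Lemma isF_nxt q : 0 < slots q -> isF (nxt q) = false.
Proof. by case: q. Qed.
Lemma slots_isF q : 0 < slots q -> isF q = false.
Proof. by case: q. Qed.

Definition fire n (c : config n) (u v : 'I_n) : config n :=
  apply_rule c u v (nxt (state c u), O0, true).

Lemma state_fire n (c : config n) u v x :
  state (fire c u v) x = if x == u then nxt (state c u) else if x == v then O0 else state c x.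
Proof. by []. Qed.

Lemma edge_fire n (c : config n) u v x y :
  edge (fire c u v) x y = if ((x == u) && (y == v)) || ((x == v) && (y == u)) then true else edge c x y.
Proof. by []. Qed.

Lemma step_spec n (c : config n) (p : pair_t n) :
  step c p = c \/ exists u v, [/\ u != v, isF (state c v), 0 < slots (state c u) & step c p = fire c u v].
Proof.
rewrite /step.
have huv : (val p).1 != (val p).2 by rewrite neq_ltn (valP p).
case E: delta => [r|].
  have [Hb He Hr Hs] := delta_spec E; subst r.
  right; exists (val p).1, (val p).2; split => //; by rewrite Hb.
case E2: delta => [r|]; last by left.
have [Hb He Hr Hs] := delta_spec E2; subst r.
right; exists (val p).2, (val p).1; split => //; by [rewrite eq_sym | rewrite Hb].
Qed.

Definition kk n (c : config n) : nat := \sum_(x < n) (~~ isF (state c x) : nat).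
Definition nF n (c : config n) : nat := \sum_(x < n) (isF (state c x) : nat).
Definition slotsum n (c : config n) : nat := \sum_(x < n) slots (state c x).

Lemma two_point n (f g : 'I_n -> nat) u v : u != v ->
  (forall x, x != u -> x != v -> f x = g x) ->
  \sum_x f x + g u + g v = \sum_x g x + f u + f v.
Proof.
move=> uv H; have vu : v != u by rewrite eq_sym.
rewrite (bigD1 u) // (bigD1 v) /=; last by rewrite vu.
rewrite [\sum_x g x](bigD1 u) // (bigD1 v) /=; last by rewrite vu.
rewrite (eq_bigr g); last by move=> x /andP [] Hu Hv; apply: H.
lia.
Qed.

Lemma state_fire_u n (c : config n) u v : state (fire c u v) u = nxt (state c u).
Proof. by rewrite state_fire eqxx. Qed.
Lemma state_fire_v n (c : config n) u v : u != v -> state (fire c u v) v = O0.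
Proof. by move=> uv; rewrite state_fire eq_sym (negbTE uv) eqxx. Qed.
Lemma state_fire_x n (c : config n) u v x : x != u -> x != v -> state (fire c u v) x = state c x.
Proof. by move=> xu xv; rewrite state_fire (negbTE xu) (negbTE xv). Qed.

Lemma kk_fire n (c : config n) u v : u != v -> isF (state c v) -> 0 < slots (state c u) ->
  kk (fire c u v) = (kk c).+1.
Proof.
move=> uv Fv Su.
have := @two_point n (fun x => (~~ isF (state (fire c u v) x) : nat))
   (fun x => (~~ isF (state c x) : nat)) u v uv.
have H : forall x, x != u -> x != v ->
   (~~ isF (state (fire c u v) x) : nat) = (~~ isF (state c x) : nat).
  by move=> x xu xv; rewrite state_fire_x.
move=> /(_ H); rewrite (state_fire_u c u v) (state_fire_v c uv) Fv isF_nxt // slots_isF // /kk /=.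
lia.
Qed.

Lemma slotsum_fire n (c : config n) u v : u != v -> isF (state c v) -> 0 < slots (state c u) ->
  slotsum (fire c u v) = (slotsum c).+1.
Proof.
move=> uv Fv Su.
have := @two_point n (fun x => slots (state (fire c u v) x))
   (fun x => slots (state c x)) u v uv.
have H : forall x, x != u -> x != v ->
   slots (state (fire c u v) x) = slots (state c x).
  by move=> x xu xv; rewrite state_fire_x.
move=> /(_ H); rewrite (state_fire_u c u v) (state_fire_v c uv) (isF_eq Fv) slots_nxt // /slotsum /=.
move: Su; lia.
Qed.

Definition InvC n (l : 'I_n) (c : config n) : Prop :=
  [/\ (forall x y, isF (state c x) -> edge c x y = false /\ edge c y x = false),
      (forall x, ~~ isF (state c x) -> connect (fun a b => edge c a b) l x)
    & slotsum c = (kk c).+1].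

Lemma InvC_fire n (l : 'I_n) c u v : InvC l c -> u != v -> isF (state c v) -> 0 < slots (state c u) ->
  InvC l (fire c u v).
Proof.
move=> [I1 I2 I3] uv Fv Su; split.
- move=> x y; rewrite state_fire !edge_fire.
  case: (eqVneq x u) => [->|xu]; first by rewrite isF_nxt.
  case: (eqVneq x v) => [->|xv] // Fx.
  rewrite ?(negbTE xu) ?(negbTE xv) /= ?andbF /=; exact: I1.
- have sub : forall a b, edge c a b -> connect (fun a b => edge (fire c u v) a b) a b.
    by move=> a b Hab; apply: connect1; rewrite edge_fire Hab; case: ifP.
  have mono : forall x, connect (fun a b => edge c a b) l x -> connect (fun a b => edge (fire c u v) a b) l x.
    by move=> x; apply: connect_sub.
  move=> x; rewrite state_fire.
  case: (eqVneq x u) => [-> _|xu]; first by apply: mono; apply: I2; rewrite slots_isF.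
  case: (eqVneq x v) => [->|xv].
    move=> _; have Hu : connect (fun a b => edge (fire c u v) a b) l u by apply: mono; apply: I2; rewrite slots_isF.
    apply: connect_trans Hu _.
    by apply: connect1; rewrite edge_fire !eqxx.
  by move=> Hx; apply: mono; exact: (I2 _ Hx).
- by rewrite slotsum_fire // kk_fire // I3.
Qed.

Lemma InvC_step n (l : 'I_n) c p : InvC l c -> InvC l (step c p).
Proof.
move=> I; case: (step_spec c p) => [->|[u [v [uv Fv Su ->]]]] //.
exact: InvC_fire.
Qed.

Lemma kk_step n (l : 'I_n) c p : InvC l c -> kk (step c p) = kk c \/ kk (step c p) = (kk c).+1.
Proof.
move=> I; case: (step_spec c p) => [->|[u [v [uv Fv Su ->]]]]; first by left.
by right; apply: kk_fire.
Qed.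

Definition prodp n (c : config n) (p : pair_t n) : bool :=
  let u := (val p).1 in let v := (val p).2 in
  ((0 < slots (state c u)) && isF (state c v)) || (isF (state c u) && (0 < slots (state c v))).

Lemma kk_prod n (l : 'I_n) c p : InvC l c -> prodp c p -> kk (step c p) = (kk c).+1.
Proof.
move=> [I1 I2 I3].
have huv : (val p).1 != (val p).2 by rewrite neq_ltn (valP p).
rewrite /prodp /step => /orP [/andP [Su Fv]|/andP [Fu Sv]].
  rewrite (isF_eq Fv) (proj2 (I1 _ (val p).1 Fv)) delta_some //.
  by rewrite -/(fire c _ _) kk_fire.
rewrite (isF_eq Fu) delta_F (proj1 (I1 _ (val p).2 Fu)) delta_some //.
by rewrite -/(fire c _ _) kk_fire // eq_sym.
Qed.

Lemma card_set_sum (T : finType) (P : pred T) : #|[set x | P x]| = \sum_x (P x : nat).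
Proof.
rewrite -sum1_card big_mkcond /=; apply: eq_bigr => x _; rewrite inE; by case: (P x).
Qed.

Lemma nF_kk n (c : config n) : nF c + kk c = n.
Proof.
rewrite /nF /kk -big_split /= -[n in _ = n]card_ord -sum1_card.
by apply: eq_bigr => x _; case: isF.
Qed.

Lemma nospan_F n (l : 'I_n) c : InvC l c -> ~~ spans l c -> 0 < nF c.
Proof.
move=> [I1 I2 I3] Hs; rewrite lt0n; apply/negP => /eqP H0.
move/negP: Hs; apply; apply/forallP => x; apply: I2.
apply/negP => Fx; move: H0; rewrite /nF (bigD1 x) //= Fx. by [].
Qed.

Lemma slots_le q : slots q <= 2 * (0 < slots q).
Proof. by case: q. Qed.

Lemma nfs q : 0 < slots q -> isF q -> False.
Proof. by case: q. Qed.

Lemma prod_bound n (l : 'I_n) c (p0 : pair_t n) : InvC l c ->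
  (kk c).+1 * nF c <= 2 * \sum_p (prodp c p : nat).
Proof.
move=> [I1 I2 I3].
set A := [set x | 0 < slots (state c x)].
set B := [set x | isF (state c x)].
have HA : (kk c).+1 <= 2 * #|A|.
  rewrite -I3 /A card_set_sum big_distrr /=; apply: leq_sum => x _; exact: slots_le.
have HB : nF c = #|B| by rewrite /B card_set_sum.
pose mm (x : 'I_n * 'I_n) := if x.1 < x.2 then x else (x.2, x.1).
pose f (x : 'I_n * 'I_n) : pair_t n := insubd p0 (mm x).
have neqAB : forall x, x \in (finset.setX A B) -> x.1 != x.2.
  move=> [a b]; rewrite !inE /= => /andP [Sa Fb]; apply/eqP => E; subst b.
  by rewrite slots_isF in Fb.
have fval : forall x, x \in (finset.setX A B) -> val (f x) = mm x.
  move=> x Hx; rewrite /f insubdK //= /mm.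
  have := neqAB x Hx; case: ltngtP => H Hn; [exact: H | exact: H | ].
  by move: Hn; rewrite (val_inj H) eqxx.
have finj : {in (finset.setX A B) &, injective f}.
  move=> x y Hx Hy /(congr1 val); rewrite (fval _ Hx) (fval _ Hy) /mm.
  move: Hx Hy; case: x => a b; case: y => a' b'; rewrite !inE /=.
  move=> /andP [Sa Fb] /andP [Sa' Fb'].
  case: ifP; case: ifP => //= _ _ [E1 E2]; subst => //.
  1,2: exfalso; first [exact: (nfs Sa' Fb) | exact: (nfs Sa Fb')].
have sub : (f @: finset.setX A B) \subset [set p | prodp c p].
  apply/fintype.subsetP => p /imsetP [x Hx ->]; rewrite inE /prodp (fval _ Hx) /mm.
  move: Hx; case: x => a b; rewrite !inE /= => /andP [Sa Fb].
  by case: ifP => _ /=; rewrite Sa Fb ?orbT.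
have := subset_leq_card sub; rewrite (card_in_imset finj) cardsX card_set_sum.
move=> H; rewrite HB.
have : 2 * #|A| * #|B| <= 2 * \sum_p (prodp c p : nat) by rewrite -mulnA leq_mul2l H orbT.
have : (kk c).+1 * #|B| <= 2 * #|A| * #|B| by rewrite leq_mul2r HA orbT.
lia.
Qed.

Fixpoint Acnt n (l : 'I_n) (t : nat) (c : config n) : nat :=
  match t with
  | 0 => ~~ spans l c
  | t'.+1 => (~~ spans l c) * \sum_(p : pair_t n) Acnt l t' (step c p)
  end.

Lemma sum_tupleS (T : finType) t (F : t.+1.-tuple T -> nat) :
  \sum_(s : t.+1.-tuple T) F s = \sum_(p : T) \sum_(s : t.-tuple T) F [tuple of p :: s].
Proof.
rewrite pair_big /=.
rewrite (reindex (fun x : T * t.-tuple T => [tuple of x.1 :: x.2])) //=.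
exists (fun s : t.+1.-tuple T => (thead s, [tuple of behead s])).
  by move=> [p s] _ /=; congr pair; apply: val_inj.
by move=> s _; apply: val_inj => /=; rewrite [s in RHS]tuple_eta.
Qed.

Lemma forallS t (P : 'I_t.+2 -> bool) :
  [forall k, P k] = P ord0 && [forall k : 'I_t.+1, P (lift ord0 k)].
Proof.
apply/forallP/andP => [H|[H0 /forallP H] k]; first by split => //; apply/forallP.
by case: (unliftP ord0 k) => [j ->|->].
Qed.

Lemma card_Acnt n (l : 'I_n) t (c : config n) :
  #|[set s : t.-tuple (pair_t n) | [forall k : 'I_t.+1, ~~ spans l (run c (take k s))]]| = Acnt l t c.
Proof.
rewrite card_set_sum.
elim: t c => [|t IH] c.
  rewrite (eq_bigr (fun _ => (~~ spans l c : nat))); last first.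
    move=> s _; congr nat_of_bool; apply/forallP/idP => [H|H k].
      by move: (H ord0); rewrite take0.
    by rewrite (ord1 k) take0.

  by rewrite sum_nat_const card_tuple expn0 mul1n.
rewrite sum_tupleS /=.
under eq_bigr => p _ do under eq_bigr => s _ do rewrite forallS /=.
case: (spans l c) => /=.
  by rewrite big1 // => p _; rewrite big1.
rewrite mul1n; apply: eq_bigr => p _; rewrite -IH; apply: eq_bigr => s _.
by [].
Qed.
Section Sec4.
Local Open Scope ring_scope.

Definition Pn n : nat := #|{: pair_t n}|.

Definition gg (R : realType) n (k : nat) : R :=
  \sum_(k <= j < n) (2 * Pn n)%:R / ((j.+1 * (n - j))%:R).

Lemma gg_ge0 (R : realType) n k : 0 <= gg R n k.
Proof. by apply: sumr_ge0 => j _; apply: divr_ge0. Qed.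

Lemma gg_S (R : realType) n k : (k < n)%N ->
  gg R n k = (2 * Pn n)%:R / ((k.+1 * (n - k))%:R) + gg R n k.+1.
Proof. by move=> kn; rewrite /gg big_ltn. Qed.

Lemma gg_anti (R : realType) n k : gg R n k.+1 <= gg R n k.
Proof.
case: (ltnP k n) => kn.
  by rewrite [gg R n k]gg_S // lerDr divr_ge0.
by rewrite /gg !big_geq // ltnW.
Qed.

Lemma drift (R : realType) n (l : 'I_n) c : InvC l c -> ~~ spans l c -> (0 < Pn n)%N ->
  \sum_(p : pair_t n) gg R n (kk (step c p)) <= (Pn n)%:R * (gg R n (kk c) - 1).
Proof.
move=> I Hs P0.
have kn : (kk c < n)%N.
  have := nF_kk c; have := nospan_F I Hs; lia.
set k := kk c.
set D := (k.+1 * (n - k))%N.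
set d : R := (2 * Pn n)%:R / D%:R.
have Hg : gg R n k = d + gg R n k.+1 by rewrite gg_S.
have per : forall p, gg R n (kk (step c p)) <= gg R n k - (prodp c p : nat)%:R * d.
  move=> p; case Hp: (prodp c p).
    by rewrite (kk_prod I Hp) Hg /= mul1r; lra.
  rewrite /= mul0r subr0.
  case: (kk_step p I) => ->; first by [].
  exact: gg_anti.
apply: le_trans (ler_sum _ (fun p _ => per p)) _.
rewrite sumrB sumr_const -mulr_suml -natr_sum.
rewrite [#|_|](_ : _ = Pn n) //.
set m := (\sum_p prodp c p)%N.
have Hm : (D <= 2 * m)%N.
  have [p0 _] : exists p0 : pair_t n, true.
    by move/card_gt0P: P0 => [p0 _]; exists p0.
  have := @prod_bound n l c p0 I; rewrite /D.
  have := nF_kk c; rewrite -/k => E.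
  have -> : (n - k)%N = nF c by lia.
  by [].
have D0 : (0 < D)%N by rewrite /D muln_gt0 /=; lia.
have : (Pn n)%:R <= m%:R * d :> R.
  rewrite /d mulrA ler_pdivlMr ?ltr0n // -!natrM ler_nat.
  by move: Hm; nia.
rewrite mulrBr mulr1 -mulr_natl; lra.
Qed.

End Sec4.
Section Sec5.
Local Open Scope ring_scope.

Lemma Acnt_span n (l : 'I_n) t c : spans l c -> Acnt l t c = 0%N.
Proof. by case: t => [|t] /= ->. Qed.

Lemma main_ineq (R : realType) n (l : 'I_n) N : (0 < Pn n)%N -> forall c, InvC l c ->
  \sum_(t < N) (Acnt l t c)%:R / (Pn n)%:R ^+ t <= gg R n (kk c) :> R.
Proof.
move=> P0; elim: N => [|N IH] c I.
  by rewrite big_ord0 gg_ge0.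
rewrite big_ord_recl.
case Hs: (spans l c).
  rewrite big1; last by move=> i _; rewrite /= Hs mul0n mul0r.
  by rewrite /= Hs mul0r add0r gg_ge0.
have Hs' : ~~ spans l c by rewrite Hs.
have P0' : 0 < (Pn n)%:R :> R by rewrite ltr0n.
set P : R := (Pn n)%:R.
have E : \sum_(i < N) (Acnt l (lift ord0 i) c)%:R / P ^+ (lift ord0 i)
   = P^-1 * \sum_(p : pair_t n) \sum_(i < N) (Acnt l i (step c p))%:R / P ^+ i.
  rewrite exchange_big mulr_sumr; apply: eq_bigr => i _.
  rewrite /= Hs /= mul1n natr_sum mulr_sumr mulr_suml; apply: eq_bigr => p _.
  by rewrite exprS invfM; field; apply/andP; split; apply: lt0r_neq0; rewrite ?exprn_gt0.
rewrite E /= Hs /= expr0 divr1.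
have := drift R I Hs' P0.
have H2 : \sum_(p : pair_t n) \sum_(i < N) (Acnt l i (step c p))%:R / P ^+ i
   <= \sum_(p : pair_t n) gg R n (kk (step c p)).
  by apply: ler_sum => p _; apply: IH; apply: InvC_step.
move=> H3.
have H4 : P^-1 * \sum_(p : pair_t n) \sum_(i < N) (Acnt l i (step c p))%:R / P ^+ i
   <= gg R n (kk c) - 1.
  rewrite ler_pdivrMl // mulrC.
  apply: le_trans H2 _; rewrite mulrC; exact: H3.
lra.
Qed.

End Sec5.
Section Sec6.
Local Open Scope ring_scope.

Lemma ln_step (R : realType) (j : nat) : (0 < j)%N ->
  ((j.+1)%:R)^-1 <= ln ((j.+1)%:R : R) - ln (j%:R).
Proof.
move=> j0.
set x : R := j%:R.
have x0 : 0 < x by rewrite ltr0n.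
have -> : (j.+1)%:R = x + 1 :> R by rewrite -natr1.
have y1 : -1 < - (x + 1)^-1.
  rewrite ltrN2 invf_lt1 ?addr_gt0 //; lra.
have := le_ln1Dx y1.
have -> : 1 - (x + 1)^-1 = x * (x + 1)^-1 by field; lra.
rewrite lnM ?posrE ?invr_gt0 ?addr_gt0 // lnV ?posrE ?addr_gt0 //.
lra.
Qed.

Definition HH (R : realType) n : R := \sum_(0 <= j < n) ((j.+1)%:R)^-1.

Lemma HH_le (R : realType) n : (0 < n)%N -> HH R n <= 1 + ln (n%:R : R).
Proof.
move=> n0; rewrite /HH big_ltn // invr1 lerD2l.
have -> : ln (n%:R : R) = \sum_(1 <= j < n) (ln ((j.+1)%:R : R) - ln (j%:R)).
  by rewrite (telescope_sumr (fun k => ln (k%:R : R))) // ln1 subr0.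
apply: ler_sum_nat => j /andP [j1 _]; exact: ln_step.
Qed.

Lemma ln4 (R : realType) : 1 <= ln (4%:R : R).
Proof.
have := ln_step R (ltn0Sn 0); rewrite ln1 subr0.
have -> : (4%:R : R) = 2%:R * 2%:R by rewrite -natrM.
rewrite lnM ?posrE ?ltr0n //.
have -> : ((1.+1)%:R : R) = 2%:R by [].
rewrite (_ : (2%:R : R)^-1 = 1/2); last by rewrite div1r.
lra.
Qed.

Lemma sumD (R : realType) n :
  \sum_(0 <= j < n) ((j.+1 * (n - j))%:R : R)^-1 = 2 * HH R n / (n.+1)%:R.
Proof.
have E : forall j, (j < n)%N -> ((j.+1 * (n - j))%:R : R)^-1 =
    (((j.+1)%:R)^-1 + ((n - j)%:R)^-1) / (n.+1)%:R.
  move=> j jn; rewrite natrM.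
  have hs : (j.+1)%:R + (n - j)%:R = (n.+1)%:R :> R by rewrite -natrD; congr _%:R; lia.
  rewrite -hs.
  have j0 : 0 <= j%:R :> R by [].
  have b0 : 0 < (n - j)%:R :> R by rewrite ltr0n subn_gt0.
  field; rewrite !lt0r_neq0 //; lra.
rewrite (eq_big_nat _ _ (fun j (Hj : (0 <= j < n)%N) => E j (proj2 (andP Hj)))) -mulr_suml big_split /=.
have -> : \sum_(0 <= i < n) ((n - i)%:R : R)^-1 = HH R n.
  rewrite /HH big_nat_rev /=; apply: eq_big_nat => j /andP [_ jn].
  by congr (_%:R^-1); lia.
  by rewrite -/(HH R n); congr (_ / _); rewrite mulrDl mul1r.
Qed.

End Sec6.
Section Sec7.
Local Open Scope ring_scope.

Lemma InvC_init n (l : 'I_n) : InvC l (init l).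
Proof.
have kk1 : kk (init l) = 1%N.
  rewrite /kk (bigD1 l) //= eqxx big1 // => x xl; by rewrite (negbTE xl).
split => //.
- move=> x; rewrite /=; case: (eqVneq x l) => [->|_] //= _.
- rewrite kk1 /slotsum (bigD1 l) //= eqxx big1 // => x xl; by rewrite (negbTE xl).
Qed.

Lemma prob_eq (R : realType) n (l : 'I_n) t :
  prob_T_gt R l t = (Acnt l t (init l))%:R / (Pn n)%:R ^+ t.
Proof. by rewrite /prob_T_gt card_Acnt natrX. Qed.

Lemma Pn_le n : (Pn n <= n * n)%N.
Proof.
rewrite /Pn card_sig; apply: leq_trans (max_card _) _.
by rewrite card_prod card_ord.
Qed.

Lemma Pn_gt0 n : (2 <= n)%N -> (0 < Pn n)%N.
Proof.
move=> n2; apply/card_gt0P.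
have h0 : (0 < n)%N by lia.
have h1 : (1 < n)%N by lia.
by exists (exist (fun p : 'I_n * 'I_n => (p.1 < p.2)%N) (Ordinal h0, Ordinal h1) isT).
Qed.

Lemma ser_le (R: realType) (u : nat -> R) (B:R): (forall t, 0 <= u t) ->
  (forall N, \sum_(t < N) u t <= B) -> (\sum_(0 <= t <oo) (u t)%:E <= B%:E)%E.
Proof.
move=> u0 H.
apply: lime_le; first by apply: is_cvg_nneseries => n _ _; rewrite lee_fin.
apply: nearW => N.
rewrite big_mkord sumEFin lee_fin; exact: H.
Qed.

Lemma gg_bound (R : realType) n : (4 <= n)%N -> gg R n 1 <= 8 * n%:R * ln (n%:R : R).
Proof.
move=> n4.
apply: le_trans (gg_anti R n 0) _.
have -> : gg R n 0 = (2 * Pn n)%:R * (2 * HH R n / (n.+1)%:R).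
  by rewrite -sumD /gg mulr_sumr.
have HP : (Pn n)%:R <= n%:R * n%:R :> R by rewrite -natrM ler_nat Pn_le.
have H1 := HH_le R (n := n) ltac:(lia).
have L4 : ln (4%:R : R) <= ln (n%:R : R) by rewrite ler_ln ?posrE ?ltr0n ?ler_nat //; lia.
have := ln4 R.
have Hn : 4 <= n%:R :> R by rewrite (ler_nat R 4 n).
have H0 : 0 <= HH R n by apply: sumr_ge0 => j _; rewrite invr_ge0.
have P0 : 0 <= (Pn n)%:R :> R by [].
rewrite natrM mulrA ler_pdivrMr ?ltr0n //.
rewrite (_ : (n.+1)%:R = n%:R + 1 :> R); last by rewrite -natr1.
move=> L; nra.
Qed.

End Sec7.

Local Open Scope ring_scope.
Theorem theorem6 (R : realType) :
  exists (C : R) (N0 : nat), (0 < C)%R /\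
    forall (n : nat) (l : 'I_n), (N0 <= n)%N ->
      (expected_time R l <= (C * n%:R * ln (n%:R : R))%R%:E)%E.
Proof.
exists 8, 4%N; split => // n l n4.
rewrite /expected_time; apply: ser_le.
  by move=> t; rewrite /prob_T_gt divr_ge0.
move=> N.
under eq_bigr => t _ do rewrite prob_eq.
have n2 : (2 <= n)%N by lia.
apply: le_trans (@main_ineq R n l N (Pn_gt0 n2) (init l) (InvC_init l)) _.
have -> : kk (init l) = 1%N.
  rewrite /kk (bigD1 l) //= eqxx big1 // => x xl; by rewrite (negbTE xl).
exact: gg_bound.
Qed.
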